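(* Let $\Phi:M_N(\mathbb{C})\to M_N(\mathbb{C})$ be a quantum operation with Kraus operators $\{E_i\}$ and Choi rank $D$. Let $\mathcal{C}$ be a quantum error correcting code for $\Phi$ with projection $P_{\mathcal C}$ and matrix $\Lambda=(\lambda_{ij})$ defined by $P_{\mathcal C}E_i^\dagger E_jP_{\mathcal C}=\lambda_{ij}P_{\mathcal C}$ for all $i,j$. Then the entropy $S(\Phi,\mathcal{C})=S(\Lambda)$ lies in the closed interval $[0,\log D]$. Moreover: (i) $S(\Phi,\mathcal{C})=0$ if and only if $\mathcal{C}$ is a unitarily correctable code for $\Phi$; (ii) $S(\Phi,\mathcal{C})=\log D$ if and only if $\mathcal{C}$ is a non-degenerate code for $\Phi$.
   Context: A quantum operation is a completely positive trace-preserving map $\Phi(\rho)=\sum_i E_i\rho E_i^\dagger$, $\sum_iE_i^\dagger E_i=\mathbb{1}$. The Choi rank of $\Phi$ is the rank of its Choi (dynamical) matrix, equivalently the minimal number of Kraus operators representing $\Phi$. A subspace $\mathcal C$ with orthogonal projection $P_{\mathcal C}$ is a (quantum error correcting) code for $\Phi$ if there are scalars $\lambda_{ij}$ with $P_{\mathcal C}E_i^\dagger E_jP_{\mathcal C}=\lambda_{ij}P_{\mathcal C}$ for all $i,j$; equivalently there is a quantum operation $\Psi$ with $\Psi\circ\Phi\circ\mathcal P_{\mathcal C}=\mathcal P_{\mathcal C}$, where $\mathcal P_{\mathcal C}(\rho)=P_{\mathcal C}\rho P_{\mathcal C}$. The matrix $\Lambda=(\lambda_{ij})$ is then a density matrix;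 changing the Kraus family changes $\Lambda$ by unitary conjugation (after padding with zeros), so its spectrum does not depend on the choice. The entropy of the code is $S(\Phi,\mathcal C):=S(\Lambda)=-\mathrm{Tr}\,\Lambda\log\Lambda$, with $\log$ the base-2 logarithm. $\mathcal{C}$ is unitarily correctable if there is a unitary $U$ such that $\Psi(\rho)=U\rho U^\dagger$ satisfies $\Psi\circ\Phi\circ\mathcal P_{\mathcal C}=\mathcal P_{\mathcal C}$. $\mathcal C$ is non-degenerate for $\Phi$ if $\operatorname{rank}\Lambda$ equals the Choi rank $D$ of $\Phi$ and all nonzero eigenvalues of $\Lambda$ are equal. *)

(* Defs.v *)
From HB Require Import structures.
From mathcomp Require Import all_boot all_order all_algebra.
From mathcomp Require Import complex.
From mathcomp Require mxtens.
From mathcomp Require Import reals exp.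
Set Implicit Arguments. Unset Strict Implicit. Unset Printing Implicit Defensive.
Import Order.TTheory GRing.Theory Num.Theory.
Local Open Scope ring_scope.
Local Open Scope sesquilinear_scope.

Section QEC.
Variable R : realType.
Local Notation C := R[i].

Definition log2 (x : R) : R := ln x / ln 2.

Definition trace_preserving N m (E : 'I_m -> 'M[C]_N) : Prop :=
  \sum_(i < m) (E i)^t* *m E i = 1%:M.

Definition qop N m (E : 'I_m -> 'M[C]_N) (rho : 'M[C]_N) : 'M[C]_N :=
  \sum_(i < m) E i *m rho *m (E i)^t*.

Definition choi_matrix N m (E : 'I_m -> 'M[C]_N) : 'M[C]_(N * N) :=
  \sum_(a < N) \sum_(b < N) mxtens.tensmx (delta_mx a b) (qop E (delta_mx a b)).

Definition choi_rank N m (E : 'I_m -> 'M[C]_N) : nat := \rank (choi_matrix E).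

Definition orth_proj N (P : 'M[C]_N) : Prop := P *m P = P /\ P^t* = P.

Definition KL_condition N m (E : 'I_m -> 'M[C]_N) (P : 'M[C]_N) (L : 'M[C]_m) : Prop :=
  forall i j, P *m ((E i)^t* *m E j) *m P = L i j *: P.

Definition eigvals n (A : 'M[C]_n) : 'rV[C]_n := spectral_diag A.

Definition vn_entropy n (A : 'M[C]_n) : R :=
  - \sum_(k < n) (let mu := complex.Re (eigvals A 0 k) in
                  if mu == 0 then 0 else mu * log2 mu).

Definition unitarily_correctable N m (E : 'I_m -> 'M[C]_N) (P : 'M[C]_N) : Prop :=
  exists U : 'M[C]_N, U \is unitarymx /\
    forall rho : 'M[C]_N, U *m qop E (P *m rho *m P) *m U^t* = P *m rho *m P.

Definition nondegenerate_code N m (E : 'I_m -> 'M[C]_N) (L : 'M[C]_m) : Prop :=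
  \rank L = choi_rank E /\
  forall k l : 'I_m, eigvals L 0 k != 0 -> eigvals L 0 l != 0 ->
    eigvals L 0 k = eigvals L 0 l.

End QEC.

(* Main.v *)
Require Import Defs.
From HB Require Import structures.
From mathcomp Require Import all_boot all_order all_algebra.
From mathcomp Require Import complex.
From mathcomp Require mxtens.
From mathcomp Require Import reals exp.
From mathcomp Require Import zify ring lra.
Import Order.TTheory GRing.Theory Num.Theory.
Local Open Scope ring_scope.
Local Open Scope sesquilinear_scope.

Section NumPart.
Variable R : realType.

Lemma ln_le_sub1 (x : R) : 0 < x -> ln x <= x - 1.
Proof.
move=> x0; have h := expR_ge1Dx (x - 1); rewrite addrC subrK in h.
by rewrite -(expRK (x - 1)) ler_ln ?posrE ?expR_gt0.
Qed.

Lemma ln_lt_sub1 (x : R) : 0 < x -> x != 1 -> ln x < x - 1.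
Proof.
move=> x0 x1; have h := expR_gt1Dx (x := x - 1).
rewrite subr_eq0 x1 addrC subrK in h; have {}h := h isT.
by rewrite -(expRK (x - 1)) ltr_ln ?posrE ?expR_gt0.
Qed.

Variables (m : nat) (p : 'I_m -> R).
Hypothesis p_ge0 : forall k, 0 <= p k.
Hypothesis p_sum : \sum_k p k = 1.

Definition rk := (\sum_k (p k != 0%R : nat))%N.
Definition hh k := if p k == 0 then 0 else p k * ln (p k).

Lemma sum_nz (c : R) : \sum_k (if p k == 0 then 0 else c) = rk%:R * c.
Proof.
rewrite /rk natr_sum mulr_suml; apply: eq_bigr => k _.
by case: (p k == 0); rewrite /= ?mul0r ?mul1r.
Qed.

Lemma sum_p_nz : \sum_k (if p k == 0 then 0 else p k) = 1.
Proof. by rewrite -p_sum; apply: eq_bigr => k _; case: eqP. Qed.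

Lemma rk_gt0 : (0 < rk)%N.
Proof.
rewrite lt0n; apply/eqP => h0; move: p_sum; rewrite big1 => [/eqP|k _].
  by rewrite eq_sym oner_eq0.
have [//|hk] := eqVneq (p k) 0; move: h0; rewrite /rk (bigD1 k) //= hk.
by rewrite add1n.
Qed.

Let r : R := rk%:R.
Lemma r_gt0 : 0 < r. Proof. by rewrite ltr0n rk_gt0. Qed.

Definition gg k := if p k == 0 then 0 else (r^-1 - p k) + p k * ln (p k) + p k * ln r.

Lemma gg_eq k : p k != 0 ->
  gg k = p k * (((r * p k)^-1 - 1) - ln ((r * p k)^-1)).
Proof.
move=> pk0; have pk : 0 < p k by rewrite lt_def pk0 p_ge0.
rewrite /gg (negbTE pk0) lnV ?lnM ?posrE ?mulr_gt0 ?r_gt0 //.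
have r0 : r != 0 by rewrite (gt_eqF r_gt0).
field; by apply/andP.
Qed.

Lemma gg_ge0 k : 0 <= gg k.
Proof.
have [pk0|pk0] := eqVneq (p k) 0; first by rewrite /gg pk0 eqxx.
have pk : 0 < p k by rewrite lt_def pk0 p_ge0.
rewrite gg_eq // mulr_ge0 ?p_ge0 // subr_ge0 ln_le_sub1 //.
by rewrite invr_gt0 mulr_gt0 ?r_gt0.
Qed.

Lemma sum_gg : \sum_k gg k = \sum_k hh k + ln r.
Proof.
have -> : \sum_k gg k = \sum_k (if p k == 0 then 0 else r^-1)
   - \sum_k (if p k == 0 then 0 else p k) + \sum_k hh k
   + ln r * \sum_k (if p k == 0 then 0 else p k).
  rewrite mulr_sumr -sumrB -!big_split /=; apply: eq_bigr => k _.
  by rewrite /gg /hh; case: (p k == 0); rewrite ?mulr0 ?subrr ?addr0 //; ring.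
rewrite sum_nz sum_p_nz mulr1 mulfV ?subrr ?add0r //.
by rewrite (gt_eqF r_gt0).
Qed.

Lemma gibbs : - \sum_k hh k <= ln r.
Proof.
rewrite lerNl -subr_ge0 opprK -sum_gg.
by apply: sumr_ge0 => k _; apply: gg_ge0.
Qed.

Lemma gibbs_eq : - \sum_k hh k = ln r <->
  (forall k l, p k != 0 -> p l != 0 -> p k = p l).
Proof.
split.
  move=> h.
  have sg0 : \sum_k gg k = 0 by rewrite sum_gg -h subrr.
  have pr k : p k != 0 -> p k = r^-1.
    move=> pk0; have pk : 0 < p k by rewrite lt_def pk0 p_ge0.
    have := psumr_eq0P (fun k _ => gg_ge0 k) sg0 (i := k) isT.
    rewrite gg_eq // => /eqP; rewrite mulf_eq0 (negbTE pk0) orFb subr_eq0.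
    have x0 : 0 < (r * p k)^-1 by rewrite invr_gt0 mulr_gt0 ?r_gt0.
    have [x1|x1] := eqVneq ((r * p k)^-1) 1.
      move=> _; move/eqP: x1; rewrite invr_eq1 => /eqP h1.
      have r0 : r != 0 by rewrite (gt_eqF r_gt0).
      by move: (congr1 (fun x => r^-1 * x) h1); rewrite mulKf // mulr1.
    by move=> /eqP he; have := (@ln_lt_sub1 _ x0 x1); rewrite -he ltxx.
  by move=> k l hk hl; rewrite (pr k hk) (pr l hl).
move=> hu.
have [k0 hk0] : exists k, p k != 0.
  case: (pickP (fun k => p k != 0)) => [k hk|hn]; first by exists k.
  have := rk_gt0; rewrite /rk big1 ?ltnn // => k _.
  by rewrite (hn k).
set c := p k0.
have pc k : p k != 0 -> p k = c by move=> hk; rewrite (hu k k0).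
have rc : r * c = 1.
  rewrite -sum_p_nz -sum_nz; apply: eq_bigr => k _.
  by case: eqP => // /eqP /pc.
apply/eqP; rewrite eq_sym -subr_eq0 opprK addrC -sum_gg.
apply/eqP; apply: big1 => k _.
have [pk0|pk0] := eqVneq (p k) 0; first by rewrite /gg pk0 eqxx.
by rewrite gg_eq // pc // rc invr1 subrr ln1 subrr mulr0.
Qed.

Definition ent := - \sum_k (if p k == 0 then 0 else p k * log2 (p k)).

Lemma ln2_gt0 : 0 < ln (2 : R).
Proof. by apply: ln_gt0; rewrite ltr1n. Qed.

Lemma entE : ent = (- \sum_k hh k) / ln 2.
Proof.
rewrite /ent mulNr mulr_suml; congr (- _); apply: eq_bigr => k _.
by rewrite /hh /log2; case: (p k == 0); rewrite ?mul0r // mulrA.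
Qed.

Lemma p_le1 k : p k <= 1.
Proof.
rewrite -p_sum (bigD1 k) //= lerDl; apply: sumr_ge0 => i _; exact: p_ge0.
Qed.

Lemma hh_le0 k : hh k <= 0.
Proof.
rewrite /hh; case: (p k == 0) => //.
by rewrite mulr_ge0_le0 ?p_ge0 // ln_le0 // p_le1.
Qed.

Lemma ent_ge0 : 0 <= ent.
Proof.
rewrite entE divr_ge0 ?(ltW ln2_gt0) // oppr_ge0.
by apply: sumr_le0 => k _; exact: hh_le0.
Qed.

Lemma ent_le : ent <= log2 rk%:R.
Proof. by rewrite entE /log2 ler_pM2r ?invr_gt0 ?ln2_gt0 // gibbs. Qed.

Lemma ent_eq_iff : ent = log2 rk%:R <->
  (forall k l, p k != 0 -> p l != 0 -> p k = p l).
Proof.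
rewrite -gibbs_eq entE /log2; split => [h|->] //.
have l2 : ln (2:R) != 0 by rewrite (gt_eqF ln2_gt0).
by move: (congr1 (fun x => x * ln 2) h); rewrite !mulfVK.
Qed.

Lemma ent_eq0 : ent = 0 <-> rk = 1%N.
Proof.
split => [h|h1]; last first.
  apply/le_anti; rewrite ent_ge0 andbT.
  by have := ent_le; rewrite h1 /log2 ln1 mul0r.
have l2 : ln (2:R) != 0 by rewrite (gt_eqF ln2_gt0).
have hs : \sum_k (- hh k) = 0.
  move: h; rewrite entE sumrN => /eqP; rewrite mulf_eq0 invr_eq0 (negbTE l2) orbF.
  by move/eqP.
have p1 k : p k != 0 -> p k = 1.
  move=> pk0; have pk : 0 < p k by rewrite lt_def pk0 p_ge0.
  have := psumr_eq0P (fun k _ => (ltac:(by rewrite oppr_ge0 hh_le0) : 0 <= - hh k)) hs (i := k) isT.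
  rewrite /hh (negbTE pk0) => /eqP; rewrite oppr_eq0 mulf_eq0 (negbTE pk0) orFb.
  by rewrite ln_eq0 // => /eqP.
have e : (rk%:R : R) = 1.
  rewrite -[RHS]sum_p_nz -[LHS]mulr1 -sum_nz; apply: eq_bigr => k _.
  have [pk|pk] := eqVneq (p k) 0; first by [].
  by rewrite (p1 k pk).
by move/eqP: e; rewrite pnatr_eq1 => /eqP.
Qed.
End NumPart.

Section MatPart.
Variable C : numClosedFieldType.

Lemma mxtc_eq0 m n (M : 'M[C]_(m, n)) : M^t* *m M = 0 -> M = 0.
Proof.
move=> h; apply/matrixP => i j; have := congr1 (fun X : 'M[C]_n => X j j) h.
rewrite !mxE => hs.
have hz : forall k, 0 <= (M^t*) j k * M k j.
  by move=> k; rewrite !mxE mulrC mul_conjC_ge0.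
have := psumr_eq0P (fun k _ => hz k) hs (i := i) isT.
by rewrite !mxE mulrC => /eqP; rewrite mul_conjC_eq0 => /eqP.
Qed.

Lemma mxct_eq0 m n (M : 'M[C]_(m, n)) : M *m M^t* = 0 -> M = 0.
Proof.
move=> h; have : M^t* = 0 by apply: mxtc_eq0; rewrite trmxCK.
by move=> /(congr1 (fun X => X^t*)); rewrite trmxCK trmx0 map_mx0.
Qed.

Lemma rank_mxct m n (A : 'M[C]_(m, n)) : \rank (A *m A^t*) = \rank A.
Proof.
apply/eqP; rewrite eqn_leq mxrankM_maxl /=.
set Z := kermx (A *m A^t*).
have hZ : Z *m A = 0.
  apply: mxct_eq0; rewrite trmx_mul map_mxM mulmxA -(mulmxA Z) mulmx_ker.
  by rewrite mul0mx.
have : (Z <= kermx A)%MS by rewrite sub_kermx hZ.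
move/mxrankS; rewrite !mxrank_ker.
have := rank_leq_row A; have := rank_leq_row (A *m A^t*).
lia.
Qed.

Lemma rank_diag n (d : 'rV[C]_n) :
  \rank (diag_mx d) = (\sum_k (d 0%R k != 0%R : nat))%N.
Proof.
elim: n d => [|n IH] d; first by rewrite big_ord0 thinmx0 mxrank0.
have e := diag_mx_row (lsubmx (d : 'rV_(1 + n))) (rsubmx (d : 'rV_(1 + n))).
rewrite hsubmxK in e.
have -> : \rank (diag_mx d) = \rank (diag_mx (d : 'rV_(1 + n))) by [].
rewrite e rank_diag_block_mx IH rank_rV.
rewrite big_ord_recl; congr (_ + _)%N.
  have e' : (diag_mx (lsubmx (d : 'rV_(1 + n))) == 0) =
           ((lsubmx (d : 'rV_(1 + n))) 0 0 == 0).
    apply/eqP/eqP => [h|h].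
      by have := congr1 (fun X : 'M[C]_1 => X 0 0) h; rewrite !mxE eqxx mulr1n.
    by apply/matrixP => i j; rewrite mxE in h; rewrite !ord1 !mxE eqxx mulr1n h.
  by rewrite e' mxE; congr (d _ _ != _); apply: val_inj.
by apply: eq_bigr => k _; rewrite mxE; congr (d _ _ != _); apply: val_inj.
Qed.

Local Notation "B ^!" :=
  (orthomx Num.conj (mx_of_hermitian (hermitian1mx _)) B) : matrix_set_scope.

Lemma proj_basis N (P : 'M[C]_N) : P *m P = P -> P^t* = P ->
  exists k k' (B : 'M[C]_(k, N)) (B' : 'M[C]_(k', N)),
   [/\ B *m B^t* = 1%:M, B' *m B'^t* = 1%:M, B *m B'^t* = 0,
       B^t* *m B + B'^t* *m B' = 1%:M & B^t* *m B = P] /\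
   (k = \rank P /\ (k + k')%N = N).
Proof.
move=> PP Ph.
set B := schmidt (row_base P); set B' := schmidt (row_base (P^!)%MS).
have Su := schmidt_complete_unitarymx P.
have e1 : col_mx B B' *m (col_mx B B')^t* = 1%:M by apply/unitarymxP.
rewrite tr_col_mx map_row_mx mul_col_row scalar_mx_block in e1.
have [h11 h12 h21 h22] := eq_block_mx e1.
have rk : (\rank P + \rank (P^!)%MS)%N = N by apply: add_rank_ortho.
have hsum : B^t* *m B + B'^t* *m B' = 1%:M.
  have rf : row_free ((col_mx B B')^t*).
    rewrite /row_free mxrank_map mxrank_tr mxrank_unitary //.
    by apply/eqP.
  apply: (row_free_inj rf); rewrite mul1mx.
  rewrite tr_col_mx map_row_mx mul_mx_row !mulmxDl -!mulmxA.
  by rewrite h11 h12 h21 h22 !mulmx0 !mulmx1 addr0 add0r.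
have h12' : B' *m B^t* = 0 by rewrite h21.
have sBP : (B <= P)%MS.
  by rewrite /B (eqmx_schmidt_free (row_base_free P)) eq_row_base.
have sB'P : (B' <= P^!)%MS.
  by rewrite /B' (eqmx_schmidt_free (row_base_free _)) eq_row_base.
have BP : B *m P = B.
  by case/submxP: sBP => D ->; rewrite -mulmxA PP.
have B'P : B' *m P = 0.
  by have /orthomx1P := sB'P; rewrite Ph.
exists (\rank P), (\rank (P^!)%MS), B, B'; split; last by [].
split => //.
by rewrite -[RHS]mul1mx -hsum mulmxDl -!mulmxA BP B'P mulmx0 addr0.
Qed.

Lemma adjtD m n (A B : 'M[C]_(m, n)) : (A + B)^t* = A^t* + B^t*.
Proof. by rewrite linearD map_mxD. Qed.
Lemma adjtB m n (A B : 'M[C]_(m, n)) : (A - B)^t* = A^t* - B^t*.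
Proof. by rewrite linearB map_mxB. Qed.
Lemma adjtM m n p (A : 'M[C]_(m, n)) (B : 'M[C]_(n, p)) : (A *m B)^t* = B^t* *m A^t*.
Proof. by rewrite trmx_mul map_mxM. Qed.
Lemma adjtZ m n a (A : 'M[C]_(m, n)) : (a *: A)^t* = a^* *: A^t*.
Proof. by rewrite linearZ map_mxZ. Qed.
Lemma adjt0 m n : (0 : 'M[C]_(m, n))^t* = 0.
Proof. by rewrite trmx0 map_mx0. Qed.
Lemma adjt1 n : (1%:M : 'M[C]_n)^t* = 1%:M.
Proof. by rewrite trmx1 map_mx1. Qed.
Lemma adjt_sum m n I (r : seq I) (Pr : pred I) (F : I -> 'M[C]_(m, n)) :
  (\sum_(i <- r | Pr i) F i)^t* = \sum_(i <- r | Pr i) (F i)^t*.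
Proof.
by rewrite (big_morph _ (@adjtD m n) (@adjt0 m n)).
Qed.
Lemma adjt_eq0 m n (A : 'M[C]_(m, n)) : A = 0 -> A^t* = 0.
Proof. by move->; rewrite adjt0. Qed.

Lemma proj_adj_idem N (V : 'M[C]_N) (P : 'M[C]_N) :
  P *m P = P -> P^t* = P -> V^t* *m V = P -> V *m P = V.
Proof.
move=> PP Ph VV.
have : (V - V *m P)^t* *m (V - V *m P) = 0.
  rewrite adjtB adjtM Ph mulmxDl !mulmxDr !mulmxN !mulNmx.
  rewrite -!mulmxA VV !mulmxA -(mulmxA P) VV !PP opprK subrr add0r addNr.
  done.
by move/mxtc_eq0/eqP; rewrite subr_eq0 => /eqP <-.
Qed.

Lemma unitary_ext N (P V : 'M[C]_N) : P *m P = P -> P^t* = P ->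
  V^t* *m V = P -> exists U, U \is unitarymx /\ U *m V = P.
Proof.
move=> PP Ph VV.
have VP := @proj_adj_idem N V P PP Ph VV.
set Q := V *m V^t*.
have QQ : Q *m Q = Q by rewrite /Q mulmxA -(mulmxA V) VV VP.
have Qh : Q^t* = Q by rewrite /Q trmx_mul map_mxM trmxCK.
have QV : Q *m V = V by rewrite /Q -mulmxA VV VP.
have [k1 [k1' [B1 [B1' [[h1 h1' h1o h1s h1P] [r1 s1]]]]]] := @proj_basis N P PP Ph.
have [k2 [k2' [B2 [B2' [[h2 h2' h2o h2s h2P] [r2 s2]]]]]] := @proj_basis N Q QQ Qh.
have e : k2 = k1.
  rewrite r1 r2 /Q (@rank_mxct _ _ V) -VV.
  have := @rank_mxct _ _ (V^t*); rewrite trmxCK => ->.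
  by rewrite mxrank_map mxrank_tr.
subst k2.
have e' : k2' = k1' by move: s1 s2; lia.
subst k2'.
set W := B1 *m V^t* *m B2^t*.
have B2'V : B2' *m V = 0.
  rewrite -QV -h2P !mulmxA.
  have -> : B2' *m B2^t* = 0.
    by move: (congr1 (fun X => X^t*) h2o); rewrite trmx_mul map_mxM trmxCK trmx0 map_mx0.
  by rewrite !mul0mx.
have WW : W *m W^t* = 1%:M.
  rewrite /W !adjtM !trmxCK !mulmxA.
  rewrite -[_ *m B2^t* *m B2]mulmxA h2P -[_ *m Q *m V]mulmxA QV.
  by rewrite -[B1 *m V^t* *m V]mulmxA VV -h1P !mulmxA h1 mul1mx h1.
have UV : (B1^t* *m W *m B2 + B1'^t* *m B2') *m V = P.
  rewrite mulmxDl -!mulmxA B2'V mulmx0 addr0 /W !mulmxA h1P.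
  rewrite -[_ *m B2^t* *m B2]mulmxA h2P -[_ *m Q *m V]mulmxA QV.
  by rewrite -mulmxA VV PP.
have h2o' : B2' *m B2^t* = 0.
  by move: (congr1 (fun X => X^t*) h2o); rewrite adjtM trmxCK adjt0.
clearbody W.
exists (B1^t* *m W *m B2 + B1'^t* *m B2'); split => //.
apply/unitarymxP.
rewrite adjtD !adjtM !trmxCK mulmxDl !mulmxDr !mulmxA.
rewrite -[B1^t* *m W *m B2 *m B2^t*]mulmxA h2 mulmx1.
rewrite -[B1^t* *m W *m B2 *m B2'^t*]mulmxA h2o mulmx0 !mul0mx.
rewrite -[B1'^t* *m B2' *m B2^t*]mulmxA h2o' mulmx0 !mul0mx.
rewrite -[B1'^t* *m B2' *m B2'^t*]mulmxA h2' mulmx1.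
by rewrite -[B1^t* *m W *m W^t*]mulmxA WW mulmx1 addr0 add0r.
Qed.

Lemma eq_from_gram N (X V G : 'M[C]_N) (a : C) :
  X^t* *m X = (a * a^*) *: G -> X^t* *m V = a^* *: G -> V^t* *m V = G ->
  X = a *: V.
Proof.
move=> hXX hXV hVV.
have Gh : G^t* = G by rewrite -hVV adjtM trmxCK.
have hVX : V^t* *m X = a *: G.
  by move: (congr1 (fun Y => Y^t*) hXV); rewrite /= adjtM trmxCK adjtZ Gh conjCK.
apply/eqP; rewrite -subr_eq0; apply/eqP/mxtc_eq0.
rewrite adjtB adjtZ mulmxDl !mulmxDr !mulmxN !mulNmx -!scalemxAl -!scalemxAr.
rewrite hXX hXV hVX hVV !scalerA opprK.
by rewrite subrr addNr addr0.
Qed.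

Lemma rank1_from N m (w : 'cV[C]_N) (Z : 'M[C]_(N, m)) (s : C) :
  w^t* *m w = s%:M -> s^* = s -> Z *m Z^t* = w *m w^t* ->
  s *: Z = w *m (w^t* *m Z).
Proof.
move=> ws sc ZZ.
rewrite mulmxA.
set X := w *m w^t*.
have Xh : X^t* = X by rewrite /X adjtM trmxCK.
have XX : X *m X = s *: X.
  by rewrite /X mulmxA -(mulmxA w) ws mul_mx_scalar scalemxAl.
move: ZZ; rewrite -/X => ZZ.
clearbody X.
apply/eqP; rewrite -subr_eq0; apply/eqP/mxct_eq0.
rewrite adjtB adjtZ sc adjtM Xh.
rewrite mulmxDl !mulmxDr !mulmxN !mulNmx -!scalemxAl -!scalemxAr.
rewrite -!mulmxA ZZ !mulmxA ZZ -(mulmxA X Z) ZZ XX -scalemxAl XX.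
by rewrite !scalerA opprK subrr addNr addr0.
Qed.
End MatPart.

Arguments ent {R m}.
Arguments rk {R m}.

Section Choi.
Variable R : realType.
Local Notation C := R[i].
Variables (N m : nat) (E : 'I_m -> 'M[C]_N).

Definition Kmx : 'M[C]_(N * N, m) :=
  \matrix_(x, i) E i (mxtens.mxtens_unindex x).2 (mxtens.mxtens_unindex x).1.

Lemma qop_delta a b c d :
  qop E (delta_mx a b) c d = \sum_i E i c a * (E i d b)^*.
Proof.
rewrite /qop summxE; apply: eq_bigr => i _.
rewrite -(mul_delta_mx (0 : 'I_1)) mulmxA -colE -mulmxA -rowE.
rewrite !mxE big_ord1 !mxE.
done.
Qed.

Lemma choiE : choi_matrix E = Kmx *m Kmx^t*.
Proof.
apply/matrixP => x y; rewrite /choi_matrix summxE.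
set x1 := (mxtens.mxtens_unindex x).1; set x2 := (mxtens.mxtens_unindex x).2.
set y1 := (mxtens.mxtens_unindex y).1; set y2 := (mxtens.mxtens_unindex y).2.
rewrite (bigD1 x1) //= [X in _ + X]big1 ?addr0 => [|a /negbTE ha]; last first.
  rewrite summxE big1 // => b _; rewrite mxE -/x1 -/y1 -/x2 -/y2 mxE.
  by rewrite eq_sym ha mul0r.
rewrite summxE (bigD1 y1) //= [X in _ + X]big1 ?addr0 => [|b /negbTE hb]; last first.
  by rewrite mxE -/x1 -/y1 -/x2 -/y2 mxE (eq_sym y1) hb andbF mul0r.
rewrite mxE -/x1 -/y1 -/x2 -/y2 mxE !eqxx mul1r qop_delta mxE.
by apply: eq_bigr => i _; rewrite !mxE.
Qed.

Lemma choi_rankE : choi_rank E = \rank Kmx.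
Proof. by rewrite /choi_rank choiE rank_mxct. Qed.
End Choi.
Arguments Kmx {R N m}.

Section Main.
Variable R : realType.
Local Notation C := R[i].
Variables (N m : nat) (E : 'I_m -> 'M[C]_N) (P : 'M[C]_N) (L : 'M[C]_m).
Hypothesis tp : trace_preserving E.
Hypothesis op : orth_proj P.
Hypothesis Pn0 : P != 0.
Hypothesis kl : KL_condition E P L.

Lemma PP : P *m P = P. Proof. by case: op. Qed.
Lemma Ph : P^t* = P. Proof. by case: op. Qed.

Lemma exists_w : exists w : 'cV[C]_N, P *m w = w /\ w != 0.
Proof.
have [i [j hij]] : exists i j, P i j != 0.
  case: (pickP (fun ij : 'I_N * 'I_N => P ij.1 ij.2 != 0)) => [[i j] h|h].
    by exists i, j.
  case/negP: Pn0; apply/eqP/matrixP => i j; rewrite mxE.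
  by have := h (i, j); rewrite /= => /negbFE/eqP.
exists (col j P); split.
  by rewrite colE mulmxA PP.
by apply/eqP => /matrixP /(_ i 0); rewrite !mxE; apply/eqP.
Qed.

Lemma trL : \sum_i L i i = 1.
Proof.
have h : P *m (\sum_i (E i)^t* *m E i) *m P = (\sum_i L i i) *: P.
  rewrite mulmx_sumr mulmx_suml scaler_suml; apply: eq_bigr => i _.
  by rewrite kl.
move: h; rewrite tp mulmx1 PP => /eqP; rewrite -subr_eq0 -{1}[P]scale1r -scalerBl.
by rewrite scaler_eq0 (negbTE Pn0) orbF subr_eq0 eq_sym => /eqP.
Qed.

Section W.
Variable w : 'cV[C]_N.
Hypothesis Pw : P *m w = w.
Hypothesis wn0 : w != 0.

Lemma wP : w^t* *m P = w^t*.
Proof. by rewrite -{1}Ph -adjtM Pw. Qed.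

Definition s : C := (w^t* *m w) 0 0.

Lemma wws : w^t* *m w = s%:M.
Proof. by apply/matrixP => i j; rewrite !ord1 [RHS]mxE eqxx mulr1n. Qed.

Lemma s_gt0 : 0 < s.
Proof.
have s_ge0 : 0 <= s.
  rewrite /s mxE; apply: sumr_ge0 => k _; rewrite !mxE mulrC mul_conjC_ge0 //.
rewrite lt_def s_ge0 andbT; apply/negP => /eqP s0.
by case/negP: wn0; apply/eqP; apply: mxtc_eq0; rewrite wws s0 raddf0.
Qed.

Lemma s_neq0 : s != 0. Proof. by rewrite gt_eqF // s_gt0. Qed.
Lemma s_conj : s^* = s. Proof. by rewrite geC0_conj // ltW // s_gt0. Qed.

Definition Ymx : 'M[C]_(N, m) := \matrix_(c, j) (E j *m w) c 0.

Lemma YY : Ymx^t* *m Ymx = s *: L.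
Proof.
apply/matrixP => i j.
have -> : (Ymx^t* *m Ymx) i j = ((E i *m w)^t* *m (E j *m w)) 0 0.
  by rewrite !mxE; apply: eq_bigr => c _; rewrite !mxE.
have e : w^t* *m (P *m ((E i)^t* *m E j) *m P) *m w = (E i *m w)^t* *m (E j *m w).
  by rewrite !mulmxA wP -!mulmxA Pw adjtM !mulmxA.
rewrite -e kl -scalemxAr -scalemxAl wP wws.
by rewrite !mxE eqxx mulr1n mulrC.
Qed.

Lemma Lh : L^t* = L.
Proof.
have h : s *: L^t* = s *: L.
  by rewrite -{1}s_conj -adjtZ -YY adjtM trmxCK YY.
move/eqP: h; rewrite -subr_eq0 -scalerBr scaler_eq0 (negbTE s_neq0) orFb.
by rewrite subr_eq0 => /eqP.
Qed.

Definition Qs := spectralmx L.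
Definition dd := spectral_diag L.

Lemma Qu : Qs \is unitarymx. Proof. exact: spectral_unitarymx. Qed.
Lemma QQt : Qs *m Qs^t* = 1%:M. Proof. by apply/unitarymxP; exact: Qu. Qed.
Lemma QtQ : Qs^t* *m Qs = 1%:M. Proof. by apply: mulmx1C; exact: QQt. Qed.

Lemma Lspec : L = Qs^t* *m diag_mx dd *m Qs.
Proof.
have Ln : L \is normalmx by apply/normalmxP; rewrite Lh.
by rewrite -invmx_unitary ?Qu //; apply/orthomx_spectralP.
Qed.

Lemma Dform : diag_mx dd = Qs *m L *m Qs^t*.
Proof. by rewrite Lspec !mulmxA QQt mul1mx -mulmxA QQt mulmx1. Qed.

Lemma dd_ge0 k : 0 <= dd 0 k.
Proof.
set Z := Ymx *m Qs^t*.
have e : s *: diag_mx dd = Z^t* *m Z.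
  rewrite Dform scalemxAl scalemxAr -YY /Z adjtM trmxCK !mulmxA.
  done.
have : 0 <= s * dd 0 k.
  have := congr1 (fun X : 'M[C]_m => X k k) e; rewrite /= [in LHS]mxE [in LHS]mxE.
  rewrite eqxx mulr1n => ->; rewrite mxE; apply: sumr_ge0 => c _.
  by rewrite !mxE mulrC mul_conjC_ge0.
by rewrite pmulr_rge0 // s_gt0.
Qed.

Lemma dd_sum : \sum_k dd 0 k = 1.
Proof.
rewrite -mxtrace_diag Dform mxtrace_mulC mulmxA QtQ mul1mx -trL.
by [].
Qed.

Definition pp k : R := complex.Re (dd 0 k).

Lemma dd_real k : dd 0 k = ((pp k)%:C)%C.
Proof.
have hi := ger0_Im (dd_ge0 k).
by rewrite {1}[dd 0 k]complexE hi /pp mulr0 addr0.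
Qed.

Lemma pp_ge0 k : 0 <= pp k.
Proof. by rewrite -ler0c -dd_real dd_ge0. Qed.

Lemma pp_sum : \sum_k pp k = 1.
Proof.
apply: (@complexI R); rewrite rmorph_sum /=.
rewrite -[X in _ = X]dd_sum; apply: eq_bigr => k _; by rewrite dd_real.
Qed.

Lemma vnE : vn_entropy L = ent pp.
Proof. by []. Qed.

Lemma rankL : \rank L = rk pp.
Proof.
have -> : \rank L = \rank (diag_mx dd).
  apply/eqP; rewrite eqn_leq; apply/andP; split.
    rewrite {1}Lspec; apply: leq_trans (mxrankM_maxl _ _) _.
    exact: mxrankM_maxr.
  rewrite Dform; apply: leq_trans (mxrankM_maxl _ _) _.
  exact: mxrankM_maxr.
rewrite rank_diag /rk; apply: eq_bigr => k _.
by rewrite dd_real (fmorph_eq0 (real_complex R)).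
Qed.

Definition Wmx : 'M[C]_(N, N * N) :=
  \matrix_(c, x) (if (mxtens.mxtens_unindex x).2 == c
                  then w (mxtens.mxtens_unindex x).1 0 else 0).

Lemma YWK : Ymx = Wmx *m Kmx E.
Proof.
apply/matrixP => c j.
transitivity (\sum_a \sum_b Wmx c (mxtens.mxtens_index (a, b)) *
                  Kmx E (mxtens.mxtens_index (a, b)) j); last first.
  rewrite [RHS]mxE (reindex (@mxtens.mxtens_index N N)) /=; last first.
    by exists (@mxtens.mxtens_unindex N N) => x _;
       [exact: mxtens.mxtens_indexK | exact: mxtens.mxtens_unindexK].
  by rewrite pair_bigA; apply: eq_bigr => -[a b] _.
rewrite mxE mxE; apply: eq_bigr => a _.
rewrite (bigD1 c) //= big1 ?addr0 => [|b hb]; last first.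
  by rewrite !mxE mxtens.mxtens_indexK /= (negbTE hb) mul0r.
by rewrite !mxE mxtens.mxtens_indexK /= eqxx mulrC.
Qed.

Lemma rankL_le : (\rank L <= choi_rank E)%N.
Proof.
rewrite choi_rankE.
have -> : L = s^-1 *: (Ymx^t* *m Ymx) by rewrite YY scalerA mulVf ?s_neq0 // scale1r.
apply: leq_trans (mxrank_scale _ _) _.
apply: leq_trans (mxrankM_maxr _ _) _.
by rewrite YWK; exact: mxrankM_maxr.
Qed.

Lemma scalerI_s (A B : 'M[C]_m) : s *: A = s *: B -> A = B.
Proof.
move/eqP; rewrite -subr_eq0 -scalerBr scaler_eq0 (negbTE s_neq0) orFb.
by rewrite subr_eq0 => /eqP.
Qed.

Lemma qop_ww : qop E (w *m w^t*) = Ymx *m Ymx^t*.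
Proof.
apply/matrixP => a b; rewrite /qop summxE mxE; apply: eq_bigr => j _.
rewrite !mulmxA -(mulmxA (E j *m w)) -adjtM [LHS]mxE big_ord1.
by rewrite !mxE.
Qed.

Lemma UC_rk1 : unitarily_correctable E P -> rk pp = 1%N.
Proof.
case=> U [Uu hU].
have PwwP : P *m (w *m w^t*) *m P = w *m w^t*.
  by rewrite mulmxA Pw -mulmxA wP.
have hZ : (U *m Ymx) *m (U *m Ymx)^t* = w *m w^t*.
  by have := hU (w *m w^t*); rewrite PwwP qop_ww => <-; rewrite adjtM !mulmxA.
have UtU : U^t* *m U = 1%:M by apply: mulmx1C; apply/unitarymxP.
have e := @rank1_from _ _ _ _ _ _ wws s_conj hZ.
set c := s^-1 *: (w^t* *m (U *m Ymx)).
have Zc : U *m Ymx = w *m c.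
  by rewrite /c -scalemxAr -e scalerA mulVf ?s_neq0 // scale1r.
have Lc : L = c^t* *m c.
  apply: scalerI_s; rewrite -YY.
  have -> : Ymx^t* *m Ymx = (U *m Ymx)^t* *m (U *m Ymx).
    by rewrite adjtM mulmxA -(mulmxA _ (U^t*)) UtU mulmx1.
  by rewrite Zc adjtM mulmxA -(mulmxA _ (w^t*)) wws mul_mx_scalar -scalemxAl.
have : (\rank L <= 1)%N.
  rewrite Lc; apply: leq_trans (mxrankM_maxr _ _) _; exact: rank_leq_row.
rewrite rankL => h1.
have := @rk_gt0 _ _ pp pp_sum.
lia.
Qed.

Lemma gram1 i (b : 'I_m -> C) :
  P *m (E i)^t* *m (\sum_j b j *: E j) *m P = (\sum_j b j * L i j) *: P.
Proof.
rewrite mulmx_sumr mulmx_suml scaler_suml; apply: eq_bigr => j _.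
by rewrite -scalemxAr -scalemxAl -(mulmxA P) kl scalerA.
Qed.

Lemma rk1_UC : rk pp = 1%N -> unitarily_correctable E P.
Proof.
move=> h1.
have [k0 hk0] : exists k, pp k != 0.
  case: (pickP (fun k => pp k != 0)) => [k hk|hn]; first by exists k.
  by move: h1; rewrite /rk big1 // => k _; rewrite (hn k).
have pk0 k : k != k0 -> pp k = 0.
  move=> hk; have [//|hpk] := eqVneq (pp k) 0; exfalso; move: h1.
  rewrite /rk (bigD1 k0) //= (bigD1 k) ?hk //=.
  rewrite hk0 hpk /=; lia.
have pk1 : pp k0 = 1.
  rewrite -pp_sum (bigD1 k0) //= big1 ?addr0 // => k hk; exact: pk0.
have ddk k : dd 0 k = (k == k0)%:R.
  rewrite dd_real; have [->|hk] := eqVneq k k0; first by rewrite pk1.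
  by rewrite pk0.
have Ddelta : diag_mx dd = delta_mx k0 k0.
  apply/matrixP => i j; rewrite !mxE ddk.
  have [<-|hij] := eqVneq i j; first by rewrite mulr1n andbb.
  rewrite mulr0n; have [ei|//] := eqVneq i k0.
  by rewrite -ei eq_sym (negbTE hij).
set q : 'rV[C]_m := delta_mx 0 k0 *m Qs.
have qt : q^t* = Qs^t* *m delta_mx k0 0.
  by rewrite /q adjtM trmx_delta map_delta_mx.
have Lq : L = q^t* *m q.
  by rewrite qt {1}Lspec Ddelta /q !mulmxA -(mulmxA _ (delta_mx k0 0)) mul_delta_mx.
have qq : q *m q^t* = 1%:M.
  rewrite qt /q mulmxA -(mulmxA _ Qs) QQt mulmx1 mul_delta_mx.
  by apply/matrixP => i j; rewrite !ord1 !mxE !eqxx.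
have Lij i j : L i j = (q 0 i)^* * q 0 j.
  by rewrite Lq mxE big_ord1 !mxE.
have sq : \sum_j q 0 j * (q 0 j)^* = 1.
  have := congr1 (fun X : 'M[C]_1 => X 0 0) qq; rewrite /= [in RHS]mxE eqxx mulr1n.
  by rewrite mxE => <-; apply: eq_bigr => j _; rewrite !mxE.
set F := \sum_j (q 0 j)^* *: E j.
set V := F *m P.
have g1 i : P *m (E i)^t* *m F *m P = (q 0 i)^* *: P.
  rewrite gram1; congr (_ *: _).
  rewrite (eq_bigr (fun j => (q 0 i)^* * (q 0 j * (q 0 j)^*))); last first.
    by move=> j _; rewrite Lij; ring.
  by rewrite -mulr_sumr sq mulr1.
have Ft : F^t* = \sum_i q 0 i *: (E i)^t*.
  by rewrite /F adjt_sum; apply: eq_bigr => i _; rewrite adjtZ conjCK.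
clearbody F.
have VV : V^t* *m V = P.
  rewrite /V adjtM Ph mulmxA Ft mulmx_sumr !mulmx_suml.
  rewrite (eq_bigr (fun i => (q 0 i * (q 0 i)^*) *: P)); first by rewrite -scaler_suml sq scale1r.
  by move=> i _; rewrite -scalemxAr -!scalemxAl g1 scalerA.
have EP i : E i *m P = q 0 i *: V.
  apply: eq_from_gram VV.
    by rewrite adjtM Ph mulmxA -(mulmxA P) kl Lij mulrC.
  by rewrite adjtM Ph /V !mulmxA g1.
clearbody V.
have [U [Uu UV]] := @unitary_ext _ _ P V PP Ph VV.
exists U; split => // rho.
have -> : qop E (P *m rho *m P) = V *m rho *m V^t*.
  rewrite /qop (eq_bigr (fun i => (q 0 i * (q 0 i)^*) *: (V *m rho *m V^t*))).
    by rewrite -scaler_suml sq scale1r.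
  move=> i _.
  have -> : E i *m (P *m rho *m P) *m (E i)^t* = (E i *m P) *m rho *m (E i *m P)^t*.
    by rewrite adjtM Ph !mulmxA.
  by rewrite EP adjtZ -!scalemxAl -scalemxAr scalerA.
by rewrite !mulmxA UV -[P *m rho *m V^t* *m U^t*]mulmxA -adjtM UV Ph.
Qed.
End W.


Lemma log2_le (a b : nat) : (0 < a)%N -> (a <= b)%N -> log2 (a%:R : R) <= log2 b%:R.
Proof.
move=> a0 ab; have b0 : (0 < b)%N by apply: leq_trans ab.
rewrite /log2 ler_pM2r ?invr_gt0 ?ln2_gt0 //.
by rewrite ler_ln ?ler_nat // posrE ltr0n.
Qed.

Lemma main_sec :
  (0 <= vn_entropy L <= log2 (choi_rank E)%:R) /\
  (vn_entropy L = 0 <-> unitarily_correctable E P) /\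
  (vn_entropy L = log2 (choi_rank E)%:R <-> nondegenerate_code E L).
Proof.
have [w [Pw wn0]] := exists_w.
have pge : forall k, 0 <= pp k by move=> k; apply: (pp_ge0 w Pw wn0).
have psum : \sum_k pp k = 1 by apply: (pp_sum w Pw wn0).
have rL : \rank L = rk pp by apply: (rankL w Pw wn0).
have rD : (rk pp <= choi_rank E)%N by rewrite -rL; apply: (rankL_le w Pw wn0).
have r0 : (0 < rk pp)%N := @rk_gt0 _ _ _ psum.
have vE : vn_entropy L = ent pp by [].
have eD : ent pp <= log2 (choi_rank E)%:R.
  by apply: le_trans (@ent_le _ _ _ pge psum) _; apply: log2_le.
have ddE k : eigvals L 0 k = ((pp k)%:C)%C.
  by apply: (dd_real w Pw wn0).
split; first by rewrite vE ent_ge0 // eD.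
split.
  rewrite vE; split => [h|h].
    by apply: (rk1_UC w Pw wn0); apply/(@ent_eq0 _ _ _ pge psum).
  by apply/(@ent_eq0 _ _ _ pge psum); exact: (UC_rk1 w Pw wn0).
rewrite vE; split => [h|[hr hu]].
  have hlog : log2 (rk pp)%:R = log2 (choi_rank E)%:R :> R.
    apply/le_anti; rewrite log2_le //=; rewrite -h; exact: ent_le.
  have hrD : rk pp = choi_rank E.
    have D0 : (0 < choi_rank E)%N by apply: leq_trans rD.
    move: hlog; rewrite /log2 => /(congr1 (fun x => x * ln (2 : R))).
    have l2 : ln (2:R) != 0 by rewrite (gt_eqF (@ln2_gt0 R)).
    rewrite !mulfVK // => /ln_inj.
    rewrite !posrE !ltr0n => /(_ r0 D0) /eqP; rewrite eqr_nat => /eqP.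
    done.
  have hu : forall k l, pp k != 0 -> pp l != 0 -> pp k = pp l.
    by apply/ent_eq_iff => //; rewrite h hrD.
  split; first by rewrite rL hrD.
  move=> k l; rewrite !ddE !(fmorph_eq0 (real_complex R)) => hk hl.
  by rewrite (hu k l hk hl).
have hrD : rk pp = choi_rank E by rewrite -rL.
rewrite -hrD; apply/ent_eq_iff => // k l hk hl.
apply: (@complexI R); rewrite -!ddE; apply: hu; rewrite ddE (fmorph_eq0 (real_complex R)) //.
Qed.
End Main.

Theorem theorem2p3 (R : realType) (N m : nat) (E : 'I_m -> 'M[R[i]]_N)
    (P : 'M[R[i]]_N) (L : 'M[R[i]]_m) :
  trace_preserving E -> orth_proj P -> P != 0 -> KL_condition E P L ->
  (0 <= vn_entropy L <= log2 (choi_rank E)%:R) /\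
  (vn_entropy L = 0 <-> unitarily_correctable E P) /\
  (vn_entropy L = log2 (choi_rank E)%:R <-> nondegenerate_code E L).
Proof. by move=> tp op Pn0 kl; apply: main_sec. Qed.
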